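(* Let $G$ and $H$ be graphs, each with at least two vertices. If there exist $r_1,r_2\in(0,1)$ with $r_1^2+r_2^2=1$ such that $G$ admits a spherical embedding of dimension $\operatorname{sdim}G$ and radius $r_1$ and $H$ admits a spherical embedding of dimension $\operatorname{sdim}H$ and radius $r_2$, then $\dim(G+H)=\operatorname{sdim}G+\operatorname{sdim}H$. Otherwise $\dim(G+H)>\operatorname{sdim}G+\operatorname{sdim}H$.
   Context: All graphs are finite and simple. A unit-distance embedding of a graph $G$ in $\mathbb{R}^n$ is an injective map $f$ from the vertex set of $G$ to $\mathbb{R}^n$ such that $|f(u)-f(v)|=1$ for every edge $uv$ and no point $f(w)$ lies on the segment $[f(u),f(v)]$ for an edge $uv$ with $w\notin\{u,v\}$ (edges may cross one another). The dimension $\dim G$ is the least natural number $n$ such that $G$ has a unit-distance embedding in $\mathbb{R}^n$. $G$ admits a spherical embedding of dimension $k$ and radius $r$ if $G$ has a unit-distance embedding in $\mathbb{R}^k$ all of whose vertices lie on a sphere $\{x\in\mathbb{R}^k:|x-c|=r\}$. The spherical dimension $\operatorname{sdim}G$ is the least $k$ such that $G$ admits a spherical embedding of dimension $k$ and some radius $r<1$ (by convention $\operatorname{sdim}$ of the graph with no vertices is $-\infty$ and $\operatorname{sdim}K_1=0$). The sum $G+H$ is obtained from disjoint copies of $G$ and $H$ by adding all edges between a vertex of $G$ and a vertex of $H$. *)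

(* Defs.v *)
From HB Require Import structures.
From mathcomp Require Import all_boot all_order all_algebra.
From mathcomp Require Import reals.
Set Implicit Arguments. Unset Strict Implicit. Unset Printing Implicit Defensive.
Import Order.TTheory GRing.Theory Num.Theory.
Local Open Scope ring_scope.

(* A finite simple graph is a finType V with a symmetric irreflexive e : rel V
   (these two properties are assumed as hypotheses where needed). *)

Definition enorm (R : realType) (n : nat) (x : 'rV[R]_n) : R :=
  Num.sqrt (\sum_(i < n) (x 0 i) ^+ 2).

Definition on_segment (R : realType) (n : nat) (a b w : 'rV[R]_n) : Prop :=
  exists t : R, 0 <= t <= 1 /\ w = (1 - t) *: a + t *: b.

Definition unit_dist_emb (R : realType) (V : finType) (e : rel V) (n : nat)
  (f : V -> 'rV[R]_n) : Prop :=
  injective f /\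
  (forall u v, e u v -> enorm (f u - f v) = 1) /\
  (forall u v w, e u v -> w != u -> w != v -> ~ on_segment (f u) (f v) (f w)).

Definition embeddable (R : realType) (V : finType) (e : rel V) (n : nat) : Prop :=
  exists f : V -> 'rV[R]_n, unit_dist_emb e f.

Definition is_dim (R : realType) (V : finType) (e : rel V) (n : nat) : Prop :=
  embeddable R e n /\ forall m, (m < n)%N -> ~ embeddable R e m.

Definition sph_embeddable (R : realType) (V : finType) (e : rel V) (k : nat) (r : R) : Prop :=
  exists (f : V -> 'rV[R]_k) (c : 'rV[R]_k),
    unit_dist_emb e f /\ forall v, enorm (f v - c) = r.

Definition sph_small (R : realType) (V : finType) (e : rel V) (k : nat) : Prop :=
  exists r : R, r < 1 /\ sph_embeddable e k r.

Definition is_sdim (R : realType) (V : finType) (e : rel V) (k : nat) : Prop :=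
  sph_small R e k /\ forall m, (m < k)%N -> ~ sph_small R e m.

Definition graph_sum (V1 V2 : finType) (e1 : rel V1) (e2 : rel V2) : rel (V1 + V2)%type :=
  fun x y =>
    match x, y with
    | inl a, inl b => e1 a b
    | inr a, inr b => e2 a b
    | _, _ => true
    end.

(* Main.v *)
Require Import Defs.
From HB Require Import structures.
From mathcomp Require Import all_boot all_order all_algebra.
From mathcomp Require Import reals ring lra zify.
From Stdlib Require Import Classical_Prop.
Import Order.TTheory GRing.Theory Num.Theory.
Set Implicit Arguments. Unset Strict Implicit. Unset Printing Implicit Defensive.
Local Open Scope ring_scope.


Definition dot {R : realType} {n : nat} (x y : 'rV[R]_n) : R := (x *m y^T) 0 0.

Lemma dotE {R : realType} {n : nat} (x y : 'rV[R]_n) :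
  dot x y = \sum_(i < n) x 0 i * y 0 i.
Proof. by rewrite /dot mxE; apply: eq_bigr => i _; rewrite mxE. Qed.

Lemma dotC {R : realType} {n : nat} (x y : 'rV[R]_n) : dot x y = dot y x.
Proof. by rewrite !dotE; apply: eq_bigr => i _; rewrite mulrC. Qed.

Lemma dotDl {R : realType} {n : nat} (x y z : 'rV[R]_n) : dot (x + y) z = dot x z + dot y z.
Proof. by rewrite /dot mulmxDl mxE. Qed.

Lemma dotZl {R : realType} {n : nat} (a : R) (x z : 'rV[R]_n) : dot (a *: x) z = a * dot x z.
Proof. by rewrite /dot -scalemxAl mxE. Qed.

Lemma dotNl {R : realType} {n : nat} (x z : 'rV[R]_n) : dot (- x) z = - dot x z.
Proof. by rewrite -scaleN1r dotZl mulN1r. Qed.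

Lemma dotBl {R : realType} {n : nat} (x y z : 'rV[R]_n) : dot (x - y) z = dot x z - dot y z.
Proof. by rewrite dotDl dotNl. Qed.

Lemma dotDr {R : realType} {n : nat} (x y z : 'rV[R]_n) : dot z (x + y) = dot z x + dot z y.
Proof. by rewrite dotC dotDl !(dotC z). Qed.

Lemma dotBr {R : realType} {n : nat} (x y z : 'rV[R]_n) : dot z (x - y) = dot z x - dot z y.
Proof. by rewrite dotC dotBl !(dotC z). Qed.

Lemma dotZr {R : realType} {n : nat} (a : R) (x z : 'rV[R]_n) : dot z (a *: x) = a * dot z x.
Proof. by rewrite dotC dotZl dotC. Qed.

Lemma dot0l {R : realType} {n : nat} (z : 'rV[R]_n) : dot 0 z = 0.
Proof. by rewrite /dot mul0mx mxE. Qed.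

Lemma dot0r {R : realType} {n : nat} (z : 'rV[R]_n) : dot z 0 = 0.
Proof. by rewrite dotC dot0l. Qed.

Lemma dot_ge0 {R : realType} {n : nat} (x : 'rV[R]_n) : 0 <= dot x x.
Proof. by rewrite dotE; apply: sumr_ge0 => i _; rewrite -expr2 sqr_ge0. Qed.

Lemma dot_eq0 {R : realType} {n : nat} (x : 'rV[R]_n) : dot x x = 0 -> x = 0.
Proof.
rewrite dotE => /eqP; rewrite psumr_eq0 => [/allP H|i _]; last by rewrite -expr2 sqr_ge0.
apply/rowP => i; rewrite mxE; have := H i (mem_index_enum _).
by rewrite -expr2 sqrf_eq0 => /eqP.
Qed.

Lemma enormE {R : realType} {n : nat} (x : 'rV[R]_n) : enorm x = Num.sqrt (dot x x).
Proof. by rewrite /enorm dotE; congr Num.sqrt; apply: eq_bigr => i _; rewrite expr2. Qed.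

Lemma enorm_eq {R : realType} {n : nat} (x : 'rV[R]_n) (r : R) :
  0 <= r -> (enorm x = r <-> dot x x = r ^+ 2).
Proof.
move=> r0; rewrite enormE; split => [<-|->]; first by rewrite sqr_sqrtr ?dot_ge0.
by rewrite sqrtr_sqr ger0_norm.
Qed.

Lemma dot_mulmx {R : realType} {n m : nat} (x : 'rV[R]_n) (M : 'M[R]_(n, m)) (y : 'rV[R]_m) :
  dot (x *m M) y = dot x (y *m M^T).
Proof. by rewrite /dot trmx_mul trmxK mulmxA. Qed.

Lemma dot_row_mx {R : realType} {n m : nat} (a c : 'rV[R]_n) (b d : 'rV[R]_m) :
  dot (row_mx a b) (row_mx c d) = dot a c + dot b d.
Proof. by rewrite /dot tr_row_mx mul_row_col mxE. Qed.

Lemma subsub {R : realType} {m1 m2 n : nat} (A B : 'M[R]_(m1, n)) (C : 'M[R]_(m2, n)) :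
  (A <= C)%MS -> (B <= C)%MS -> (A - B <= C)%MS.
Proof. by move=> hA hB; rewrite addmx_sub // -scaleN1r scalemx_sub. Qed.

Lemma gram_schmidt {R : realType} (n m : nat) (A : 'M[R]_(m, n)) :
  exists r (Q : 'M[R]_(r, n)), Q *m Q^T = 1%:M /\ (A <= Q)%MS /\ (Q <= A)%MS.
Proof.
elim: m A => [|m IH] A.
  exists 0%N, 0; split; first by apply/matrixP => -[].
  by split; apply/row_subP => -[].
pose v : 'rV[R]_n := usubmx (A : 'M_(1 + m, n)).
pose A' : 'M[R]_(m, n) := dsubmx (A : 'M_(1 + m, n)).
have eA : A = col_mx v A' by rewrite /v /A' vsubmxK.
have hA'A : (A' <= A)%MS by rewrite eA -(addsmxE v A') addsmxSr.
have hvA : (v <= A)%MS by rewrite eA -(addsmxE v A') addsmxSl.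
have [r [Q' [hQQ [hAQ hQA]]]] := IH A'.
pose w := v - v *m Q'^T *m Q'.
have hwQ : w *m Q'^T = 0 by rewrite /w mulmxBl -!mulmxA hQQ mulmx1 subrr.
have hwA : (w <= A)%MS.
  by rewrite subsub // (submx_trans (submxMl _ _) (submx_trans hQA hA'A)).
have [w0|wn0] := eqVneq w 0.
  exists r, Q'; split => //; split; last exact: submx_trans hQA hA'A.
  suff : (col_mx v A' <= Q')%MS by rewrite -eA.
  rewrite col_mx_sub hAQ andbT.
  have -> : v = v *m Q'^T *m Q' by apply/eqP; rewrite -subr_eq0 -/w w0.
  exact: submxMl.
have dpos : 0 < dot w w by rewrite lt_def dot_ge0 andbT; apply/eqP => /dot_eq0; apply/eqP.
pose s := (Num.sqrt (dot w w))^-1.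
have s0 : s != 0 by rewrite invr_eq0 sqrtr_eq0 -ltNge.
exists (1 + r)%N, (col_mx (s *: w) Q'); split.
  have tZ : (s *: w)^T = s *: w^T by apply/matrixP => i j; rewrite !mxE.
  rewrite tr_col_mx mul_col_row hQQ tZ -!scalemxAl -!scalemxAr hwQ !scaler0.
  have hQw : Q' *m w^T = 0 by rewrite -[Q']trmxK -trmx_mul hwQ trmx0.
  rewrite hQw scaler0 (scalar_mx_block 1 r) ; congr block_mx.
  apply/matrixP => i j; rewrite !ord1 scalerA [LHS]mxE [RHS]mxE eqxx mulr1n -/(dot w w) /s -expr2 exprVn.
  by rewrite sqr_sqrtr ?dot_ge0 // mulVf // gt_eqF.
have sws : w = s^-1 *: (s *: w) by rewrite scalerA mulVf // scale1r.
have wQ : (w <= col_mx (s *: w) Q')%MS.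
  by rewrite {1}sws scalemx_sub // -(addsmxE (s *: w) Q') addsmxSl.
have Q'Q : (Q' <= col_mx (s *: w) Q')%MS by rewrite -(addsmxE (s *: w) Q') addsmxSr.
split.
  suff : (col_mx v A' <= col_mx (s *: w) Q')%MS by rewrite -eA.
  rewrite col_mx_sub (submx_trans hAQ Q'Q) andbT.
  have -> : v = w + v *m Q'^T *m Q' by rewrite /w subrK.
  by rewrite addmx_sub // (submx_trans (submxMl _ _) Q'Q).
by rewrite col_mx_sub scalemx_sub // (submx_trans hQA hA'A).
Qed.


Lemma inQ {R : realType} {a n : nat} (Q : 'M[R]_(a, n)) (x : 'rV[R]_n) :
  Q *m Q^T = 1%:M -> (x <= Q)%MS -> x *m Q^T *m Q = x.
Proof. by move=> hQ /submxP [D ->]; rewrite -(mulmxA D) hQ mulmx1. Qed.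

Lemma dotQ {R : realType} {a n : nat} (Q : 'M[R]_(a, n)) (x y : 'rV[R]_n) :
  dot (x *m Q^T) (y *m Q^T) = dot x (y *m Q^T *m Q).
Proof. by rewrite dot_mulmx trmxK. Qed.

Lemma isoQ {R : realType} {a n : nat} (Q : 'M[R]_(a, n)) (x y : 'rV[R]_n) :
  Q *m Q^T = 1%:M -> (y <= Q)%MS -> dot (x *m Q^T) (y *m Q^T) = dot x y.
Proof. by move=> hQ hy; rewrite dotQ inQ. Qed.

Lemma orthQ {R : realType} {a n : nat} (Q : 'M[R]_(a, n)) (u d : 'rV[R]_n) :
  Q *m Q^T = 1%:M -> (u <= Q)%MS -> dot u (d - d *m Q^T *m Q) = 0.
Proof.
move=> hQ hu; by rewrite dotBr (dotC u (d *m _ *m _)) dot_mulmx dot_mulmx trmxK inQ // dotC subrr.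
Qed.

Lemma radQ {R : realType} {a n : nat} (Q : 'M[R]_(a, n)) (x d : 'rV[R]_n) :
  Q *m Q^T = 1%:M -> (x <= Q)%MS ->
  dot (x *m Q^T - d *m Q^T) (x *m Q^T - d *m Q^T) =
  dot (x - d) (x - d) - dot (d - d *m Q^T *m Q) (d - d *m Q^T *m Q).
Proof.
move=> hQ hx; set d1 := d *m Q^T *m Q.
have hd1 : (d1 <= Q)%MS by apply: submxMl.
have hxd : (x - d1 <= Q)%MS by rewrite addmx_sub // -scaleN1r scalemx_sub.
have -> : x *m Q^T - d *m Q^T = (x - d1) *m Q^T.
  by rewrite mulmxBl /d1 -(mulmxA _ Q) hQ mulmx1.
rewrite isoQ //.
have -> : x - d = (x - d1) - (d - d1) by rewrite opprB addrA subrK.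
have o := orthQ d hQ hxd.
rewrite -/d1 in o *.
move: o; set u := x - d1; set e := d - d1 => o; clearbody u e.
rewrite dotBl !dotBr (dotC e u) o; lra.
Qed.


Lemma seg_shift {R : realType} {n : nat} (t : R) (u v w x0 : 'rV[R]_n) :
  w - x0 = (1 - t) *: (u - x0) + t *: (v - x0) -> w = (1 - t) *: u + t *: v.
Proof.
rewrite !scalerBr addrACA -opprD -scalerDl subrK scale1r => /eqP.
by rewrite subr_eq subrK => /eqP.
Qed.

Lemma subsubK {R : realType} {n : nat} (a b c : 'rV[R]_n) : (a - c) - (b - c) = a - b.
Proof. by rewrite opprB addrA subrK. Qed.

Lemma transfer {R : realType} (V : finType) (e : rel V) (n a : nat) (Q : 'M[R]_(a, n))
  (f : V -> 'rV[R]_n) (x0 : 'rV[R]_n) :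
  Q *m Q^T = 1%:M -> unit_dist_emb e f -> (forall v, (f v - x0 <= Q)%MS) ->
  unit_dist_emb e (fun v => (f v - x0) *m Q^T).
Proof.
move=> hQ [inj [un seg]] hU.
have back : forall v, (f v - x0) *m Q^T *m Q = f v - x0 by move=> v; rewrite inQ.
have hdiff : forall u v, (f u - x0) *m Q^T - (f v - x0) *m Q^T = (f u - f v) *m Q^T.
  by move=> u v; rewrite -mulmxBl subsubK.
split; [|split].
- move=> u v /(congr1 (mulmx^~ Q)); rewrite !back => /eqP; rewrite (can_eq (subrK x0)).
  by move/eqP/inj.
- move=> u v euv; rewrite (enorm_eq _ ler01) expr1n hdiff isoQ //.
    by move: (un u v euv); rewrite (enorm_eq _ ler01) expr1n.
  by rewrite -(subsubK _ _ x0) addmx_sub // -scaleN1r scalemx_sub.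
- move=> u v w euv wu wv [t [ht hw]]; apply: (seg u v w euv wu wv); exists t; split => //.
  apply: (seg_shift (x0 := x0)); rewrite -back hw mulmxDl -!scalemxAl !back //.
Qed.

Lemma dotNN {R : realType} {n : nat} (x : 'rV[R]_n) : dot (- x) (- x) = dot x x.
Proof. by rewrite dotNl dotC dotNl opprK. Qed.

Lemma pyth0 {R : realType} {n : nat} (d b : 'rV[R]_n) :
  dot (d + b) (d + b) = 1 -> dot d d = 1 -> dot d b = 0 -> dot b b = 0.
Proof. rewrite dotDl !dotDr (dotC b d) => h1 h2 h3; rewrite h2 h3 in h1; lra. Qed.

Lemma one_side {R : realType} (V1 V2 : finType) (e1 : rel V1) (n a : nat)
  (f1 : V1 -> 'rV[R]_n) (f2 : V2 -> 'rV[R]_n) (Q : 'M[R]_(a, n)) (g0 : V1) (h0 : V2) :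
  (1 < #|V1|)%N -> (1 < #|V2|)%N ->
  unit_dist_emb e1 f1 -> injective f2 ->
  (forall g h, dot (f1 g - f2 h) (f1 g - f2 h) = 1) ->
  Q *m Q^T = 1%:M ->
  (forall g, (f1 g - f1 g0 <= Q)%MS) ->
  (forall h, (f2 h - f2 h0) *m Q^T = 0) ->
  let d := f2 h0 - f1 g0 in let d' := d - d *m Q^T *m Q in
  [/\ 0 < 1 - dot d' d', 0 < dot d' d' & sph_embeddable e1 a (Num.sqrt (1 - dot d' d'))].
Proof.
move=> c1 c2 emb inj2 cross hQ hU hW d d'.
pose p g := (f1 g - f1 g0) *m Q^T.
have embp : unit_dist_emb e1 p by apply: transfer.
pose c := d *m Q^T.
have hrad : forall g, dot (p g - c) (p g - c) = 1 - dot d' d'.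
  move=> g; rewrite /p /c radQ // /d subsubK.
  by rewrite cross.
split.
- rewrite ltNge; apply/negP => hle.
  have [g [g' [_ _ gg']]] := card_gt1P c1.
  have z : forall g, p g = c.
    move=> x; apply/eqP; rewrite -subr_eq0; apply/eqP/dot_eq0.
    by apply/eqP; rewrite eq_le dot_ge0 andbT hrad.
  by move: gg'; rewrite (embp.1 g g') ?eqxx // !z.
- rewrite lt_def dot_ge0 andbT; apply/negP => /eqP /dot_eq0 /eqP.
  rewrite subr_eq0 => /eqP hd.
  have [h [h' [_ _ hh']]] := card_gt1P c2.
  have z : forall h, f2 h = f2 h0.
    move=> x; apply/eqP; rewrite -subr_eq0; apply/eqP/dot_eq0.
    have e1' : dot (d + (f2 x - f2 h0)) (d + (f2 x - f2 h0)) = 1.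
      by rewrite /d addrC addrA subrK -opprB dotNN cross.
    have e2' : dot d d = 1 by rewrite /d -opprB dotNN cross.
    have e3 : dot d (f2 x - f2 h0) = 0 by rewrite hd dot_mulmx dot_mulmx trmxK hW mul0mx dot0r.
    exact: (pyth0 e1' e2' e3).
  by move: hh'; rewrite (inj2 h h') ?eqxx // !z.
- exists p, c; split => // g; by rewrite enormE hrad.
Qed.


Lemma polar {R : realType} {n : nat} (x x0 y y0 : 'rV[R]_n) :
  dot (x - y) (x - y) = 1 -> dot (x - y0) (x - y0) = 1 ->
  dot (x0 - y) (x0 - y) = 1 -> dot (x0 - y0) (x0 - y0) = 1 ->
  dot (x - x0) (y - y0) = 0.
Proof.
rewrite ?dotBl ?dotBr ?dotBl (dotC y x) (dotC y0 x) (dotC y x0) (dotC y0 x0) => h1 h2 h3 h4.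
lra.
Qed.

Lemma sqrt_lt1 {R : realType} (x : R) : 0 < x -> x < 1 -> 0 < Num.sqrt x < 1.
Proof.
move=> x0 x1; rewrite sqrtr_gt0 x0 /=.
have := sqr_sqrtr (ltW x0); have := sqrtr_ge0 x; set r := Num.sqrt x => r0 hr.
rewrite ltNge; apply/negP => r1.
have : 1 <= r ^+ 2 by rewrite expr2 -[1](mulr1 1) ler_pM.
lra.
Qed.

Lemma radii_sum {R : realType} {n : nat} (d : 'rV[R]_n) (PU PW : 'M[R]_n) :
  PU + PW = 1%:M -> dot (d *m PU) (d *m PW) = 0 -> dot d d = 1 ->
  (1 - dot (d - d *m PU) (d - d *m PU)) + (1 - dot (- d - (- d) *m PW) (- d - (- d) *m PW)) = 1.
Proof.
move=> hP o hd.
have hd' : d = d *m PU + d *m PW by rewrite -mulmxDr hP mulmx1.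
have e1 : d - d *m PU = d *m PW by rewrite {1}hd' addrAC subrr add0r.
have e2 : - d - (- d) *m PW = - (d *m PU) by rewrite mulNmx opprK {1}hd' opprD subrK.
rewrite e1 e2 dotNN.
move: hd o; rewrite {1 2}hd'; move: (d *m PU) (d *m PW) => x y.
rewrite dotDl !dotDr (dotC y x) => h o; rewrite o in h; lra.
Qed.

Lemma lower {R : realType} (V1 V2 : finType) (e1 : rel V1) (e2 : rel V2) (n : nat)
  (F : (V1 + V2)%type -> 'rV[R]_n) :
  (1 < #|V1|)%N -> (1 < #|V2|)%N -> unit_dist_emb (graph_sum e1 e2) F ->
  exists a b (r1 r2 : R), [/\ (a + b <= n)%N, 0 < r1 < 1, 0 < r2 < 1,
     sph_embeddable e1 a r1 /\ sph_embeddable e2 b r2 &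
     ((a + b)%N = n -> r1 ^+ 2 + r2 ^+ 2 = 1)].
Proof.
move=> c1 c2 [inj [un seg]].
pose f1 v := F (inl v); pose f2 v := F (inr v).
have emb1 : unit_dist_emb e1 f1.
  split; [by move=> x y /inj [] | split].
  - by move=> u v; apply: (un (inl u) (inl v)).
  - by move=> u v w euv wu wv; apply: (seg (inl u) (inl v) (inl w)).
have emb2 : unit_dist_emb e2 f2.
  split; [by move=> x y /inj [] | split].
  - by move=> u v; apply: (un (inr u) (inr v)).
  - by move=> u v w euv wu wv; apply: (seg (inr u) (inr v) (inr w)).
have cross : forall g h, dot (f1 g - f2 h) (f1 g - f2 h) = 1.
  by move=> g h; have := un (inl g) (inr h) isT; rewrite (enorm_eq _ ler01) expr1n.
have cross' : forall h g, dot (f2 h - f1 g) (f2 h - f1 g) = 1.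
  by move=> h g; have := un (inr h) (inl g) isT; rewrite (enorm_eq _ ler01) expr1n.
have /card_gt0P [g0 _] : (0 < #|V1|)%N by apply: ltnW.
have /card_gt0P [h0 _] : (0 < #|V2|)%N by apply: ltnW.
pose A := \matrix_(i < #|V1|) (f1 (enum_val i) - f1 g0).
pose B := \matrix_(i < #|V2|) (f2 (enum_val i) - f2 h0).
have rowA : forall g, row (enum_rank g) A = f1 g - f1 g0 by move=> g; rewrite rowK enum_rankK.
have rowB : forall h, row (enum_rank h) B = f2 h - f2 h0 by move=> h; rewrite rowK enum_rankK.
have [a [QU [hQU [hAQ hQA]]]] := gram_schmidt A.
have [b [QW [hQW [hBQ hQB]]]] := gram_schmidt B.
have aU : forall g, (f1 g - f1 g0 <= QU)%MS.
  by move=> g; exact: submx_trans (eq_row_sub _ (rowA g)) hAQ.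
have bW : forall h, (f2 h - f2 h0 <= QW)%MS.
  by move=> h; exact: submx_trans (eq_row_sub _ (rowB h)) hBQ.
have AB0 : A *m B^T = 0.
  apply/matrixP => i j; rewrite [RHS]mxE.
  have -> : (A *m B^T) i j = dot (row i A) (row j B).
    by rewrite dotE !mxE; apply: eq_bigr => k _; rewrite !mxE.
  by rewrite !rowK; apply: polar.
have [DA eDA] := submxP hQA.
have [DB eDB] := submxP hQB.
have QUW0 : QU *m QW^T = 0.
  by rewrite eDA eDB trmx_mul -mulmxA (mulmxA A) AB0 mul0mx mulmx0.
have QWU0 : QW *m QU^T = 0 by rewrite -[QW]trmxK -trmx_mul QUW0 trmx0.
have BQU0 : forall h, (f2 h - f2 h0) *m QU^T = 0.
  move=> h; rewrite -rowB -row_mul eDA trmx_mul mulmxA.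
  by rewrite -[B]trmxK -trmx_mul AB0 trmx0 mul0mx row0.
have AQW0 : forall g, (f1 g - f1 g0) *m QW^T = 0.
  by move=> g; rewrite -rowA -row_mul eDB trmx_mul mulmxA AB0 mul0mx row0.
have [p1 dp1 sph1] := one_side c1 c2 emb1 emb2.1 cross hQU aU BQU0.
have [p2 dp2 sph2] := one_side c2 c1 emb2 emb1.1 cross' hQW bW AQW0.
set r1 := Num.sqrt _ in sph1; set r2 := Num.sqrt _ in sph2.
exists a, b, r1, r2.
have QQ : col_mx QU QW *m (col_mx QU QW)^T = 1%:M.
  by rewrite tr_col_mx mul_col_row hQU hQW QUW0 QWU0 -scalar_mx_block.
have rk1 : (a + b <= \rank (col_mx QU QW))%N.
  by apply: (mulmx1_min_rank (M := 1%:M) (N := (col_mx QU QW)^T)); rewrite mul1mx.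
have rk2 := rank_leq_col (col_mx QU QW).
split.
- exact: leq_trans rk1 rk2.
- by apply: sqrt_lt1 => //; rewrite ltrBlDr ltrDl.
- by apply: sqrt_lt1 => //; rewrite ltrBlDr ltrDl.
- by split.
move=> abn.
have full : row_full (col_mx QU QW) by rewrite /row_full eqn_leq rk2 -{1}abn rk1.
have [X hX] := row_fullP full.
have QtQ : (col_mx QU QW)^T *m col_mx QU QW = 1%:M.
  apply/eqP; rewrite -subr_eq0; apply/eqP.
  set Q := col_mx QU QW; set M := Q^T *m Q - 1%:M.
  have : Q *m M = 0 by rewrite /M mulmxBr mulmxA QQ mul1mx mulmx1 subrr.
  by move=> QM0; rewrite -[M]mul1mx -hX -mulmxA QM0 mulmx0.
rewrite tr_col_mx mul_row_col in QtQ.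
rewrite /r1 /r2 !sqr_sqrtr ?ltW //.
have orth : dot ((f2 h0 - f1 g0) *m (QU^T *m QU)) ((f2 h0 - f1 g0) *m (QW^T *m QW)) = 0.
  by rewrite !mulmxA dot_mulmx -!mulmxA QWU0 !mulmx0 dot0r.
have := radii_sum QtQ orth (cross' h0 g0).
by rewrite opprB !mulmxA.
Qed.


Lemma comb_row {R : realType} {k1 k2 : nat} (t : R) (a c : 'rV[R]_k1) (b d : 'rV[R]_k2) :
  (1 - t) *: row_mx a b + t *: row_mx c d = row_mx ((1 - t) *: a + t *: c) ((1 - t) *: b + t *: d).
Proof. by rewrite !scale_row_mx add_row_mx. Qed.

Lemma sub_row {R : realType} {k1 k2 : nat} (a c : 'rV[R]_k1) (b d : 'rV[R]_k2) :
  row_mx a b - row_mx c d = row_mx (a - c) (b - d).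
Proof. by rewrite opp_row_mx add_row_mx. Qed.

Lemma upper {R : realType} (V1 V2 : finType) (e1 : rel V1) (e2 : rel V2) (k1 k2 : nat) (r1 r2 : R) :
  0 < r1 -> 0 < r2 -> r1 ^+ 2 + r2 ^+ 2 = 1 ->
  sph_embeddable e1 k1 r1 -> sph_embeddable e2 k2 r2 ->
  embeddable R (graph_sum e1 e2) (k1 + k2).
Proof.
move=> r1p r2p hr [f1 [c1 [[inj1 [un1 seg1]] rad1]]] [f2 [c2 [[inj2 [un2 seg2]] rad2]]].
have n1 : forall v, dot (f1 v - c1) (f1 v - c1) = r1 ^+ 2.
  by move=> v; apply/enorm_eq; [exact: ltW | exact: rad1].
have n2 : forall v, dot (f2 v - c2) (f2 v - c2) = r2 ^+ 2.
  by move=> v; apply/enorm_eq; [exact: ltW | exact: rad2].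
have nz1 : forall v, f1 v - c1 != 0.
  by move=> v; apply/eqP => h; have := n1 v; rewrite h dot0l => /eqP; rewrite eq_sym sqrf_eq0 gt_eqF.
have nz2 : forall v, f2 v - c2 != 0.
  by move=> v; apply/eqP => h; have := n2 v; rewrite h dot0l => /eqP; rewrite eq_sym sqrf_eq0 gt_eqF.
have i1 : forall u v, f1 u - c1 = f1 v - c1 -> u = v by move=> u v /addIr /inj1.
have i2 : forall u v, f2 u - c2 = f2 v - c2 -> u = v by move=> u v /addIr /inj2.
pose F (x : (V1 + V2)%type) : 'rV[R]_(k1 + k2) :=
  match x with inl v => row_mx (f1 v - c1) 0 | inr v => row_mx 0 (f2 v - c2) end.
exists F; split; [|split].
- case=> [u|u] [v|v] /= /eq_row_mx [L Rr].
  + by rewrite (i1 _ _ L).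
  + by move: (nz1 u); rewrite L eqxx.
  + by move: (nz1 v); rewrite L eqxx.
  + by rewrite (i2 _ _ Rr).
- case=> [u|u] [v|v] /= euv; rewrite (enorm_eq _ ler01) expr1n sub_row dot_row_mx.
  + rewrite subrr dot0l addr0 subsubK.
    by have := un1 u v euv; rewrite (enorm_eq _ ler01) expr1n.
  + by rewrite subr0 sub0r dotNN n1 n2.
  + by rewrite subr0 sub0r dotNN n1 n2; apply: hr.
  + rewrite subrr dot0l add0r subsubK.
    by have := un2 u v euv; rewrite (enorm_eq _ ler01) expr1n.
- case=> [u|u] [v|v] [w|w] /= euv wu wv [t [ht]]; rewrite /= comb_row => /eq_row_mx [L Rr].
  + apply: (seg1 u v w euv wu wv); exists t; split => //; exact: seg_shift L.
  + by move: (nz2 w); rewrite Rr !scaler0 addr0 eqxx.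
  + move: Rr; rewrite scaler0 add0r => /eqP; rewrite eq_sym scaler_eq0 (negbTE (nz2 v)) orbF => /eqP t0.
    by have := i1 w u; rewrite L t0 subr0 scale1r scale0r addr0 => /(_ erefl) e; rewrite e eqxx in wu.
  + move: L; rewrite scaler0 addr0 => /eqP; rewrite eq_sym scaler_eq0 (negbTE (nz1 u)) orbF subr_eq0 => /eqP t1.
    by have := i2 w v; rewrite Rr -t1 subrr scale0r add0r scale1r => /(_ erefl) e; rewrite e eqxx in wv.
  + move: Rr; rewrite scaler0 addr0 => /eqP; rewrite eq_sym scaler_eq0 (negbTE (nz2 u)) orbF subr_eq0 => /eqP t1.
    by have := i1 w v; rewrite L -t1 subrr scale0r add0r scale1r => /(_ erefl) e; rewrite e eqxx in wv.
  + move: L; rewrite scaler0 add0r => /eqP; rewrite eq_sym scaler_eq0 (negbTE (nz1 v)) orbF => /eqP t0.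
    by have := i2 w u; rewrite Rr t0 subr0 scale1r scale0r addr0 => /(_ erefl) e; rewrite e eqxx in wu.
  + by move: (nz1 w); rewrite L !scaler0 addr0 eqxx.
  + apply: (seg2 u v w euv wu wv); exists t; split => //; exact: seg_shift Rr.
Qed.


Lemma ex_min (P : nat -> Prop) : (exists n, P n) -> exists n, P n /\ forall m, (m < n)%N -> ~ P m.
Proof.
move=> [n Pn]; apply: NNPP => H.
suff : forall k m, (m < k)%N -> ~ P m by move/(_ n.+1 n (ltnSn n)).
elim=> [//|k IH] m; rewrite ltnS leq_eqVlt => /orP [/eqP -> Pk|/IH //].
by apply: H; exists k; split.
Qed.

Lemma trZ {R : realType} {m n : nat} (a : R) (M : 'M[R]_(m, n)) : (a *: M)^T = a *: M^T.
Proof. by apply/matrixP => i j; rewrite !mxE. Qed.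

Lemma simplex {R : realType} (V : finType) (e : rel V) (irr : irreflexive e) :
  exists f : V -> 'rV[R]_#|V|, unit_dist_emb e f /\
    (forall v, enorm (f v - 0) = Num.sqrt (2^-1)) /\
    (forall u v, u != v -> enorm (f u - f v) = 1).
Proof.
pose s : R := Num.sqrt (2^-1).
have s2 : s ^+ 2 = 2^-1 by rewrite sqr_sqrtr // invr_ge0 ler0n.
have s0 : s != 0 by apply/eqP => h; move: s2; rewrite h expr0n /= => /eqP; rewrite eq_sym invr_eq0 pnatr_eq0.
pose f (v : V) : 'rV[R]_#|V| := s *: delta_mx 0 (enum_rank v).
have fE : forall v k, f v 0 k = s * (enum_rank v == k)%:R.
  by move=> v k; rewrite /f !mxE eqxx /= eq_sym.
have dd : forall u v, dot (f u) (f v) = s ^+ 2 * (enum_rank u == enum_rank v)%:R.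
  move=> u v; rewrite /dot /f trZ -scalemxAl -scalemxAr scalerA trmx_delta mul_delta_mx_cond.
  by rewrite -expr2; case: (enum_rank u == enum_rank v); rewrite ?mulr0n ?mulr1n ?scaler0 !mxE ?mulr1 ?mulr0.
have unit : forall u v, u != v -> enorm (f u - f v) = 1.
  move=> u v uv; rewrite (enorm_eq _ ler01) dotBl !dotBr !dd !eqxx !(inj_eq enum_rank_inj).
  have vu : (v == u) = false by rewrite eq_sym (negbTE uv).
  rewrite (negbTE uv) vu s2 expr1n /= ?mulr1n ?mulr0n; lra.
clearbody f.
exists f; split; [split; [|split]|split].
- move=> u v /(congr1 (fun m : 'rV[R]_#|V| => m 0 (enum_rank u))); rewrite !fE eqxx.
  case: eqP => [/enum_rank_inj -> //|_] /=; rewrite ?mulr1n ?mulr0n mulr1 mulr0 => /eqP.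
  by rewrite (negbTE s0).
- by move=> u v euv; apply: unit; apply/eqP => uv; move: euv; rewrite uv irr.
- move=> u v w _ wu wv [t [_ /(congr1 (fun m : 'rV[R]_#|V| => m 0 (enum_rank w)))]].
  rewrite !mxE !fE eqxx mulr1 !(inj_eq enum_rank_inj) eq_sym (negbTE wu) eq_sym (negbTE wv).
  by rewrite !mulr0 addr0 => /eqP; rewrite (negbTE s0).
- by move=> v; rewrite subr0 enormE dd eqxx mulr1 sqrtr_sqr ger0_norm ?sqrtr_ge0.
- exact: unit.
Qed.

Unset Implicit Arguments.
Theorem mainTheorem5 (R : realType) (V1 V2 : finType) (e1 : rel V1) (e2 : rel V2)
  (sym1 : symmetric e1) (irr1 : irreflexive e1)
  (sym2 : symmetric e2) (irr2 : irreflexive e2)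
  (card1 : (1 < #|V1|)%N) (card2 : (1 < #|V2|)%N) :
  exists n k1 k2 : nat,
    [/\ is_dim R (graph_sum e1 e2) n, is_sdim R e1 k1, is_sdim R e2 k2 &
      ((exists r1 r2 : R,
          [/\ 0 < r1 < 1, 0 < r2 < 1, r1 ^+ 2 + r2 ^+ 2 = 1,
              sph_embeddable e1 k1 r1 & sph_embeddable e2 k2 r2]) ->
         n = (k1 + k2)%N) /\
      (~ (exists r1 r2 : R,
          [/\ 0 < r1 < 1, 0 < r2 < 1, r1 ^+ 2 + r2 ^+ 2 = 1,
              sph_embeddable e1 k1 r1 & sph_embeddable e2 k2 r2]) ->
         (k1 + k2 < n)%N)].
Proof.
have irrS : irreflexive (graph_sum e1 e2) by case=> x /=; [exact: irr1 | exact: irr2].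
have half : Num.sqrt (2^-1 : R) < 1.
  have h2 : (2^-1 : R) < 1 by lra.
  by rewrite -[X in _ < X]sqrtr1 ltr_sqrt ?ltr01.
have sm : forall (V : finType) (e : rel V), irreflexive e -> sph_small R e #|V|.
  move=> V e irr; have [f [emb [rad _]]] := simplex (R := R) irr.
  by exists (Num.sqrt (2^-1)); split => //; exists f, 0; split.
have [n [[F embF] minn]] : exists n, is_dim R (graph_sum e1 e2) n.
  apply: ex_min; have [f [emb _]] := simplex (R := R) irrS; by exists _, f.
have [k1 [sk1 mink1]] : exists k, is_sdim R e1 k by apply: ex_min; exists #|V1|; exact: sm.
have [k2 [sk2 mink2]] : exists k, is_sdim R e2 k by apply: ex_min; exists #|V2|; exact: sm.
have [a [b [r1 [r2 [ab [hr1 hr2 [s1 s2] eqr]]]]]] := lower card1 card2 embF.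
have ka : (k1 <= a)%N.
  rewrite leqNgt; apply/negP => lt; apply: (mink1 a lt); exists r1; split => //.
  by case/andP: hr1.
have kb : (k2 <= b)%N.
  rewrite leqNgt; apply/negP => lt; apply: (mink2 b lt); exists r2; split => //.
  by case/andP: hr2.
exists n, k1, k2; split; [split; [by exists F | exact: minn] | by split | by split | split].
- move=> [r1' [r2' [/andP [p1 _] /andP [p2 _] hr e1' e2']]].
  have emb := upper p1 p2 hr e1' e2'.
  have : ~ (k1 + k2 < n)%N by move=> lt; exact: (minn _ lt emb).
  lia.
- move=> nr; rewrite ltn_neqAle; apply/andP; split; last by lia.
  apply/eqP => kn; apply: nr.
  have ea : a = k1 by lia.
  have eb : b = k2 by lia.
  subst a b; exists r1, r2; split => //; apply: eqr; lia.
Qed.
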